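(* Let $\gamma_X = (X, d_X)$ and $\gamma_Y = (Y, d_Y)$ be two dynamic metric spaces. Then for any $k \in \mathbb{Z}_{\geq 0}$ and $n \in \mathbb{N}$, \[ d_H\left(D_k^n(\gamma_X), D_k^n(\gamma_Y)\right) \leq 2 \cdot d_{\mathrm{dyn}}(\gamma_X, \gamma_Y). \]
   Context: A dynamic metric space (DMS) $\gamma_X = (X, d_X(\cdot))$ is a finite set $X$ with a function $d_X : \mathbb{R} \times X \times X \to \mathbb{R}_{\geq 0}$ such that each $d_X(t)$ is a pseudometric and each $t \mapsto d_X(t)(x,x')$ is continuous. For $S \subseteq X$, $\gamma_S = (S, d_X|_S)$. For a compact interval $I$, $d_X(I)(x,x') := \inf_{t\in I} d_X(t)(x,x')$. For a semimetric $d$ and $\delta \ge 0$, $\mathcal{R}_\delta(d)$ is the simplicial complex whose simplices are finite nonempty $\sigma$ with $d(x,y)\le\delta$ for all $x,y\in\sigma$. $\mathbf{Dyn}$ is the poset of pairs $(I,\delta)$ ($I=[a,b]$ compact interval, $\delta\ge0$) with $(I,\delta)\le(I',\delta')$ iff $I\subseteq I'$ and $\delta\le\delta'$; $\mathcal{R}^{\mathrm{lev}}(\gamma_X)(I,\delta) = \mathcal{R}_\delta(d_X(I))$ with inclusions, and $H_k$ is simplicial homology over a fixed field. Curvature set: $K_n(\gamma_X) = \{\gamma_S : S \subseteq X, |S| \le n\}$; persistence set: $D_k^n(\gamma_X) = \{H_k(\mathcal{R}^{\mathrm{lev}}(\gamma_S)) : \gamma_S \in K_n(\gamma_X)\}$.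 For $\varepsilon \ge 0$ and $([a,b],\delta)\in\mathbf{Dyn}$ let $([a,b],\delta)^{\varepsilon} = ([a-\varepsilon,b+\varepsilon],\delta+\varepsilon)$. Two modules $\mathbb{V},\mathbb{W}:\mathbf{Dyn}\to\mathbf{Vec}$ are $\varepsilon$-interleaved if there are natural families $f_p:\mathbb{V}(p)\to\mathbb{W}(p^\varepsilon)$, $g_p:\mathbb{W}(p)\to\mathbb{V}(p^\varepsilon)$ with $g_{p^\varepsilon}\circ f_p = \mathbb{V}(p\le p^{2\varepsilon})$ and $f_{p^\varepsilon}\circ g_p=\mathbb{W}(p\le p^{2\varepsilon})$; the interleaving distance $d_I^{\mathbf{Vec}}$ is the infimum of such $\varepsilon$. $d_H$ is the Hausdorff distance between sets of modules induced by $d_I^{\mathbf{Vec}}$: $d_H(P,Q) = \max\{\sup_{\mathbb{V}\in P}\inf_{\mathbb{W}\in Q} d_I^{\mathbf{Vec}}(\mathbb{V},\mathbb{W}), \sup_{\mathbb{W}\in Q}\inf_{\mathbb{V}\in P} d_I^{\mathbf{Vec}}(\mathbb{V},\mathbb{W})\}$. The distance $d_{\mathrm{dyn}}$: a tripod between sets $X,Y$ is a set $Z$ with surjections $\varphi_X:Z\to X$, $\varphi_Y:Z\to Y$. For $t\in\mathbb{R}$, $\varepsilon>0$, $(\bigvee_{[t-\varepsilon,t+\varepsilon]} d_X)(x,x') := \min_{t'\in[t-\varepsilon,t+\varepsilon]} d_X(t')(x,x')$. The tripod is a $(2,\varepsilon)$-tripod if for all $t$ and all $z,z'\in Z$: $(\bigvee_{[t-\varepsilon,t+\varepsilon]}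 d_X)(\varphi_X z,\varphi_X z') \le d_Y(t)(\varphi_Y z,\varphi_Y z') + 2\varepsilon$ and $(\bigvee_{[t-\varepsilon,t+\varepsilon]} d_Y)(\varphi_Y z,\varphi_Y z') \le d_X(t)(\varphi_X z,\varphi_X z') + 2\varepsilon$. Its distortion is the infimum of such $\varepsilon>0$, and $d_{\mathrm{dyn}}(\gamma_X,\gamma_Y)$ is the infimum of distortions over all tripods. *)

(* Defs.v *)
From HB Require Import structures.
From mathcomp Require Import all_boot all_order all_algebra.
From mathcomp Require Import all_classical all_reals all_analysis.
Set Implicit Arguments. Unset Strict Implicit. Unset Printing Implicit Defensive.
Import Order.TTheory GRing.Theory Num.Theory.
Import numFieldNormedType.Exports.
Local Open Scope classical_set_scope.
Local Open Scope ring_scope.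

Definition is_dms (R : realType) (X : finType) (d : R -> X -> X -> R) : Prop :=
  [/\ (forall t x y, 0 <= d t x y),
      (forall t x, d t x x = 0),
      (forall t x y, d t x y = d t y x),
      (forall t x y z, d t x z <= d t x y + d t y z) &
      (forall x y, continuous (fun t : R => d t x y))].

Definition dist_int (R : realType) (X : finType) (d : R -> X -> X -> R)
    (a b : R) (x y : X) : R :=
  inf [set d t x y | t in [set t : R | a <= t <= b]].

(* Filtered complexes indexed by Dyn = {([a,b], delta)}: a complex is a
   predicate on (finite) subsets of the vertex type. *)
Definition filt (R : realType) (T : finType) := R -> R -> R -> {set T} -> Prop.

(* R^lev(gamma_S)([a,b],delta) = R_delta(d_X([a,b])|_S): nonempty finite
   sigma contained in S whose points are pairwise within delta. *)
Definition rips (R : realType) (X : finType) (d : R -> X -> X -> R)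
    (S : {set X}) : filt R X :=
  fun a b delta s =>
    [/\ s != finset.set0, s \subset S &
        forall x y, x \in s -> y \in s -> dist_int d a b x y <= delta].

Section Homology.
Variable F : fieldType.

Definition chain (T : finType) := {set T} -> F.

(* orientation: vertices ordered by enum_rank; sign of the face s \ v *)
Definition sgn (T : finType) (v : T) (s : {set T}) : F :=
  (-1) ^+ #|[set u in s | (enum_rank u < enum_rank v)%N]|.

(* simplicial boundary operator (non-augmented: no face on the empty set) *)
Definition bd (T : finType) (c : chain T) : chain T :=
  fun tau => if tau == finset.set0 then 0
             else \sum_(v in ~: tau) sgn v (v |: tau) * c (v |: tau).

(* k-chains of the complex K (k-simplices have k+1 vertices) *)
Definition is_chain (T : finType) (K : {set T} -> Prop) (k : nat) (c : chain T) :=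
  forall s, c s != 0 -> K s /\ #|s| = k.+1.

Definition is_cycle (T : finType) (K : {set T} -> Prop) (k : nat) (c : chain T) :=
  is_chain K k c /\ forall s, bd c s = 0.

Definition is_boundary (T : finType) (K : {set T} -> Prop) (k : nat) (c : chain T) :=
  exists b, is_chain K k.+1 b /\ forall s, c s = bd b s.

Definition homologous (T : finType) (K : {set T} -> Prop) (k : nat) (c c' : chain T) :=
  is_boundary K k (fun s => c s - c' s).

Definition is_linear (T1 T2 : finType) (f : chain T1 -> chain T2) :=
  forall (a : F) (u v : chain T1),
    f (fun s => a * u s + v s) = (fun s => a * f u s + f v s).

(* A linear map H_k(K1 p) -> H_k(K2 p^e) is represented by a linear      *)
(* map on chains sending cycles to cycles and boundaries to boundaries  *)
(* (every linear map of homology lifts this way, over a field).          *)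
(* p = ([a,b],dl) with a <= b, 0 <= dl; p^e = ([a-e,b+e], dl+e);          *)
(* p <= q iff [a,b] \subset [a',b'] and dl <= dl'.                        *)
Variable R : realType.

Definition hom_family (T1 T2 : finType) (K1 : filt R T1) (K2 : filt R T2)
    (k : nat) (e : R) (f : R -> R -> R -> chain T1 -> chain T2) : Prop :=
  forall a b dl, a <= b -> 0 <= dl ->
   [/\ is_linear (f a b dl),
       (forall z, is_cycle (K1 a b dl) k z ->
                  is_cycle (K2 (a - e) (b + e) (dl + e)) k (f a b dl z)),
       (forall z, is_boundary (K1 a b dl) k z ->
                  is_boundary (K2 (a - e) (b + e) (dl + e)) k (f a b dl z)) &
       (* naturality: f_q o V(p <= q) = W(p^e <= q^e) o f_p *)
       (forall a' b' dl', a' <= a -> b <= b' -> dl <= dl' ->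
          forall z, is_cycle (K1 a b dl) k z ->
            homologous (K2 (a' - e) (b' + e) (dl' + e)) k
                       (f a' b' dl' z) (f a b dl z))].

Definition interleaved (T1 T2 : finType) (K1 : filt R T1) (K2 : filt R T2)
    (k : nat) (e : R) : Prop :=
  exists f g,
   [/\ hom_family K1 K2 k e f,
       hom_family K2 K1 k e g,
       (* g_{p^e} o f_p = V(p <= p^{2e}) *)
       (forall a b dl, a <= b -> 0 <= dl -> forall z, is_cycle (K1 a b dl) k z ->
          homologous (K1 (a - 2 * e) (b + 2 * e) (dl + 2 * e)) k
             (g (a - e) (b + e) (dl + e) (f a b dl z)) z) &
       (* f_{p^e} o g_p = W(p <= p^{2e}) *)
       (forall a b dl, a <= b -> 0 <= dl -> forall z, is_cycle (K2 a b dl) k z ->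
          homologous (K2 (a - 2 * e) (b + 2 * e) (dl + 2 * e)) k
             (f (a - e) (b + e) (dl + e) (g a b dl z)) z)].

Definition dI (T1 T2 : finType) (K1 : filt R T1) (K2 : filt R T2) (k : nat) : \bar R :=
  ereal_inf [set e%:E | e in [set e : R | 0 <= e /\ interleaved K1 K2 k e]].

(* Hausdorff distance between the persistence sets
   D_k^n(gamma_X) = { H_k(R^lev(gamma_S)) : S \subset X, |S| <= n } and
   D_k^n(gamma_Y). *)
Definition dH_pers (X Y : finType) (dX : R -> X -> X -> R) (dY : R -> Y -> Y -> R)
    (k n : nat) : \bar R :=
  maxe
   (ereal_sup [set ereal_inf [set dI (rips dX S) (rips dY S') k
                              | S' in [set S' : {set Y} | (#|S'| <= n)%N]]
              | S in [set S : {set X} | (#|S| <= n)%N]])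
   (ereal_sup [set ereal_inf [set dI (rips dX S) (rips dY S') k
                              | S in [set S : {set X} | (#|S| <= n)%N]]
              | S' in [set S' : {set Y} | (#|S'| <= n)%N]]).

End Homology.

Section Ddyn.
Variable R : realType.

Definition vee (X : finType) (d : R -> X -> X -> R) (t e : R) (x y : X) : R :=
  inf [set d t' x y | t' in [set t' : R | t - e <= t' <= t + e]].

Definition is_2_tripod (X Y : finType) (Z : Type)
    (dX : R -> X -> X -> R) (dY : R -> Y -> Y -> R)
    (pX : Z -> X) (pY : Z -> Y) (e : R) : Prop :=
  forall (t : R) (z z' : Z),
    vee dX t e (pX z) (pX z') <= dY t (pY z) (pY z') + 2 * e /\
    vee dY t e (pY z) (pY z') <= dX t (pX z) (pX z') + 2 * e.

Definition distortion (X Y : finType) (Z : Type)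
    (dX : R -> X -> X -> R) (dY : R -> Y -> Y -> R)
    (pX : Z -> X) (pY : Z -> Y) : \bar R :=
  ereal_inf [set e%:E | e in [set e : R | 0 < e /\ is_2_tripod dX dY pX pY e]].

Definition d_dyn (X Y : finType) (dX : R -> X -> X -> R) (dY : R -> Y -> Y -> R)
    : \bar R :=
  ereal_inf [set D | exists (Z : Type) (pX : Z -> X) (pY : Z -> Y),
     [/\ (forall x, exists z, pX z = x), (forall y, exists z, pY z = y) &
         D = distortion dX dY pX pY]].

End Ddyn.

(* Main.v *)
Require Import Defs.
From HB Require Import structures.
From mathcomp Require Import all_boot all_order all_algebra.
From mathcomp Require Import all_classical all_reals all_analysis.
From mathcomp Require Import ring lra.
Set Implicit Arguments. Unset Strict Implicit. Unset Printing Implicit Defensive.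
Import Order.TTheory GRing.Theory Num.Theory.
Local Open Scope ring_scope.


Section Comb.
Variable F : fieldType.
Variable T : finType.
Implicit Types (s t : {set T}) (c : chain F T).

Definition ltr (u v : T) := (enum_rank u < enum_rank v)%N.
Definition sg (b : bool) : F := if b then -1 else 1.

Lemma sgK b : sg b * sg b = 1.
Proof. by case: b; rewrite /sg ?mulr1 // mulrNN mulr1. Qed.

Lemma ltrr u : ltr u u = false.
Proof. by rewrite /ltr ltnn. Qed.

Lemma ltrN u v : u != v -> ltr u v = ~~ ltr v u.
Proof.
move=> uv; rewrite /ltr ltn_neqAle -leqNgt.
have -> : (enum_rank u != enum_rank v) = true.
  by apply: contra uv => /eqP /enum_rank_inj ->.
by [].
Qed.

Lemma sg_neq u v : u != v -> sg (ltr u v) * sg (ltr v u) = -1.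
Proof. by move=> /ltrN ->; case: (ltr v u); rewrite /sg ?mulr1 ?mul1r. Qed.

Lemma sgnE (v : T) s : sgn F v s = \prod_(u in s) sg (ltr u v).
Proof.
rewrite /sgn /sg -big_mkcondr /= prodr_const; congr (_ ^+ _).
by apply: eq_card => u; rewrite !inE.
Qed.

Lemma sgnU1 u w s : w \notin s -> sgn F u (w |: s) = sg (ltr w u) * sgn F u s.
Proof. by move=> ws; rewrite !sgnE big_setU1. Qed.

Lemma sgn_self u s : sgn F u (u |: s) = sgn F u s.
Proof.
case: (boolP (u \in s)) => us; last by rewrite sgnU1 // ltrr mul1r.
by have -> : u |: s = s by apply/setP => x; rewrite !inE; case: eqP => // ->.
Qed.

Lemma sgnD1 u w s : w \in s -> sgn F u s = sg (ltr w u) * sgn F u (s :\ w).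
Proof. by move=> ws; rewrite -{1}(finset.setD1K ws) sgnU1 // setD11. Qed.

Lemma sgn2 u s : sgn F u s * sgn F u s = 1.
Proof.
rewrite sgnE -big_split /=; apply: big1 => v _; exact: sgK.
Qed.

Lemma bdZD a (u v : chain F T) t :
  bd (fun s => a * u s + v s) t = a * bd u t + bd v t.
Proof.
rewrite /bd; case: ifP => _; first by rewrite mulr0 addr0.
rewrite mulr_sumr -big_split; apply: eq_bigr => w _ /=; ring.
Qed.

Lemma bd0 t : bd (fun _ : {set T} => (0 : F)) t = 0.
Proof. by rewrite /bd; case: ifP => // _; apply: big1 => w _; rewrite mulr0. Qed.

Lemma bd_ext (u v : chain F T) t : (forall s, u s = v s) -> bd u t = bd v t.
Proof. by move=> uv; rewrite /bd; case: ifP => // _; apply: eq_bigr => w _; rewrite uv. Qed.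

Lemma antisym_sum (P : pred T) (G : T -> T -> F) :
  (forall v w, G v w = G w v) ->
  \sum_(v | P v) \sum_(w | P w && (w != v)) sg (ltr v w) * G v w = 0.
Proof.
move=> Gs.
pose A v w := if ltr v w then G v w else 0.
transitivity (\sum_(v | P v) \sum_(w | P w) (- A v w + A w v)).
  apply: eq_bigr => v Pv; rewrite [RHS](bigID (fun w => w != v)) /=.
  rewrite [X in _ = _ + X]big1 ?addr0; last first.
    by move=> w /andP[_]; rewrite negbK => /eqP ->; rewrite /A ltrr oppr0 addr0.
  apply: eq_bigr => w /andP[_ wv]; rewrite /A.
  rewrite (ltrN (u:=v) (v:=w)); last by rewrite eq_sym.
  by case: (ltr w v); rewrite /sg /= ?mulN1r ?mul1r ?oppr0 ?add0r ?addr0 // Gs.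
under eq_bigr => v _ do rewrite big_split /= sumrN.
rewrite big_split /= sumrN [X in _ + X]exchange_big /=.
by rewrite addrC subrr.
Qed.

Lemma bd_bd c t : bd (bd c) t = 0.
Proof.
rewrite /bd; case: ifP => // t0.
transitivity (\sum_(v | v \in ~: t) \sum_(w | (w \in ~: t) && (w != v))
   sg (ltr v w) * (sgn F v t * sgn F w t * c (w |: (v |: t)))).
  apply: eq_bigr => v; rewrite inE => vt.
  rewrite ifF; last first.
    by apply/negbTE/set0Pn; exists v; rewrite setU11.
  rewrite mulr_sumr; apply: eq_big => [w|w].
    by rewrite !inE negb_or andbC.
  rewrite !inE negb_or => /andP[wv wt].
  rewrite sgn_self (sgn_self w) sgnU1 //; ring.
apply: antisym_sum => v w; rewrite finset.setUCA; ring.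
Qed.


Lemma bdD (u v : chain F T) t : bd (fun s => u s + v s) t = bd u t + bd v t.
Proof. by rewrite -[bd u t]mul1r -bdZD; apply: bd_ext => s; rewrite mul1r. Qed.

Lemma bd_neq0 c t : bd c t != 0 -> t != finset.set0 /\ exists2 v, v \notin t & c (v |: t) != 0.
Proof.
rewrite /bd; case: ifP => [_|t0]; first by rewrite eqxx.
move=> H; split => //.
have [//|hc] := pselect (exists2 v, v \notin t & c (v |: t) != 0).
move/negP: H; case; apply/eqP; apply: big1 => v; rewrite inE => vt.
case: (eqVneq (c (v |: t)) 0) => [->|cv]; first by rewrite mulr0.
by exfalso; apply: hc; exists v.
Qed.

Section Move.
Variables x x0 : T.
Hypothesis xx0 : x != x0.

Definition hmove c : chain F T := fun u =>
  if (x \in u) && (x0 \in u) then - (sgn F x0 u * c (u :\ x0)) else 0.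

Definition rho c : chain F T := fun t => c t + bd (hmove c) t + hmove (bd c) t.

Lemma hmoveZD a (u v : chain F T) t :
  hmove (fun s => a * u s + v s) t = a * hmove u t + hmove v t.
Proof. rewrite /hmove; case: ifP => _; [ring | ring]. Qed.

Lemma rhoZD a (u v : chain F T) t :
  rho (fun s => a * u s + v s) t = a * rho u t + rho v t.
Proof.
rewrite /rho (bd_ext _ (hmoveZD a u v)) bdZD.
have -> : hmove (bd (fun s => a * u s + v s)) t = a * hmove (bd u) t + hmove (bd v) t.
  by rewrite -hmoveZD /hmove; case: ifP => // _; rewrite bdZD.
ring.
Qed.

Lemma hmove_neq0 c u : hmove c u != 0 -> [/\ x \in u, x0 \in u & c (u :\ x0) != 0].
Proof.
rewrite /hmove; case: ifP => [/andP[-> ->] H|]; last by rewrite eqxx.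
split => //; apply: contra H => /eqP ->; by rewrite mulr0 oppr0.
Qed.

Lemma rho_x c t : x \in t -> rho c t = 0.
Proof.
move=> xt; rewrite /rho.
have tn0 : (t == finset.set0) = false by apply/negbTE/set0Pn; exists x.
case: (boolP (x0 \in t)) => x0t.
  have xt' : x \in t :\ x0 by rewrite !inE xt andbT; exact: xx0.
  have tn0' : (t :\ x0 == finset.set0) = false by apply/negbTE/set0Pn; exists x.
  rewrite {2}/hmove xt x0t /= {2}/bd tn0'.
  have x0in : x0 \in ~: (t :\ x0) by rewrite !inE eqxx.
  rewrite (bigD1 x0 x0in) /= (finset.setD1K x0t).
  have -> : \sum_(i in ~: (t :\ x0) | i != x0)
      sgn F i (i |: t :\ x0) * c (i |: t :\ x0) =
      \sum_(i in ~: t) sgn F i (i |: t :\ x0) * c (i |: t :\ x0).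
    apply: eq_bigl => w; rewrite !inE negb_and negbK.
    by case: (eqVneq w x0) => [->|]; rewrite ?x0t //= andbT.
  rewrite {1}/bd; case: ifP => [/eqP t0|_]; first by move: xt; rewrite t0 inE.
  have -> : \sum_(v in ~: t) sgn F v (v |: t) * hmove c (v |: t) =
      sgn F x0 t * \sum_(i in ~: t) sgn F i (i |: t :\ x0) * c (i |: t :\ x0).
    rewrite mulr_sumr; apply: eq_bigr => v; rewrite inE => vt.
    have vx0 : v != x0 by apply: contraNneq vt => ->.
    rewrite /hmove !inE xt x0t !orbT /=.
    have -> : (v |: t) :\ x0 = v |: (t :\ x0).
      apply/setP => w; rewrite !inE; case: (eqVneq w v) => [->|] //=.
      by rewrite vx0.
    rewrite sgn_self (sgn_self v) (sgnD1 v x0t) (sgnU1 _ vt).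
    have := sg_neq vx0; rewrite -/(ltr _ _) => H.
    transitivity (- (sg (ltr v x0) * sg (ltr x0 v)) *
      (sgn F x0 t * (sgn F v (t :\ x0) * c (v |: t :\ x0)))); first ring.
    by rewrite H opprK mul1r.
  rewrite mulrDr mulrA sgn2 mul1r; ring.
- have -> : hmove (bd c) t = 0 by rewrite /hmove (negbTE x0t) andbF.
  rewrite addr0 /bd; case: ifP => [/eqP t0|_]; first by move: xt; rewrite t0 inE.
  have x0in : x0 \in ~: t by rewrite inE.
  rewrite (bigD1 x0 x0in) /= big1 ?addr0.
    rewrite /hmove setU11 !inE xt orbT /= (finset.setU1K x0t) sgn_self.
    rewrite mulrN mulrA sgn2 mul1r; ring.
  move=> v /andP[vt vx0]; rewrite /hmove !inE (eq_sym x0) (negbTE vx0) (negbTE x0t) /=.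
  by rewrite andbF mulr0.
Qed.

Lemma rho_nx c t : x \notin t -> c t = 0 ->
  (x0 \in t -> c ((x |: t) :\ x0) = 0) -> rho c t = 0.
Proof.
move=> xt ct cxt; rewrite /rho ct add0r.
have -> : hmove (bd c) t = 0 by rewrite /hmove (negbTE xt).
rewrite addr0 /bd; case: ifP => // _; apply: big1 => v; rewrite inE => vt.
rewrite /hmove; case: ifP => [/andP[]|]; last by rewrite mulr0.
rewrite !inE (negbTE xt) orbF => /eqP vx; subst v.
rewrite eq_sym (negbTE xx0) /= => x0t; by rewrite cxt // mulr0 oppr0 mulr0.
Qed.

Lemma rho_id c t : (forall s, x \in s -> c s = 0) -> rho c t = c t.
Proof.
move=> cx.
have h0 : forall u, hmove c u = 0.
  move=> u; rewrite /hmove; case: ifP => // /andP[xu _].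
  by rewrite cx ?mulr0 ?oppr0 // in_setD1 xx0.
rewrite /rho (bd_ext _ h0) bd0 addr0 /hmove; case: ifP => [/andP[xt _]|]; last by rewrite addr0.
rewrite /bd; case: ifP => _; first by rewrite mulr0 oppr0 addr0.
rewrite big1 ?mulr0 ?oppr0 ?addr0 // => w _; rewrite cx ?mulr0 //.
by rewrite !inE eq_sym xx0 xt orbT.
Qed.

Lemma rho_bd c t : rho (bd c) t = bd (rho c) t.
Proof.
rewrite /rho bdD bdD bd_bd.
have -> : hmove (bd (bd c)) t = 0.
  by rewrite /hmove; case: ifP => // _; rewrite bd_bd mulr0 oppr0.
by rewrite addr0 addr0.
Qed.

Lemma rho_cycle c t : (forall s, bd c s = 0) -> rho c t - c t = bd (hmove c) t.
Proof.
move=> bc; rewrite /rho.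
have -> : hmove (bd c) t = 0 by rewrite /hmove; case: ifP => // _; rewrite bc mulr0 oppr0.
ring.
Qed.

End Move.
End Comb.

Section Push.
Variable F : fieldType.
Variables T1 T2 : finType.

Definition eps (m' : T2 -> T1) (t : {set T2}) : F :=
  \prod_(u in t) \prod_(w in t) sg F (ltr u w && ltr (m' w) (m' u)).

Definition push (m' : T2 -> T1) (D' : {set T2}) (c : chain F T1) : chain F T2 :=
  fun t => if t \subset D' then eps m' t * c (m' @: t) else 0.

Lemma epsU1 (m' : T2 -> T1) (v : T2) (t : {set T2}) : v \notin t -> eps m' (v |: t) =
  eps m' t * \prod_(u in t) (sg F (ltr u v && ltr (m' v) (m' u)) *
                             sg F (ltr v u && ltr (m' u) (m' v))).
Proof.
move=> vt; rewrite /eps big_setU1 //=.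
rewrite [X in _ * X = _](eq_bigr (fun u => sg F (ltr u v && ltr (m' v) (m' u)) *
   \prod_(w in t) sg F (ltr u w && ltr (m' w) (m' u)))); last first.
  by move=> u _; rewrite big_setU1.
rewrite big_split /= big_split /=.
rewrite (big_setU1 _ vt) /= ltrr /=; ring.
Qed.

Lemma sign_case (a b : bool) :
  sg F a * (sg F (a && ~~ b) * sg F (~~ a && b)) = sg F b.
Proof. by case: a; case: b; rewrite /sg /= ?mulr1 ?mul1r ?mulrNN ?mulr1. Qed.

Lemma push_bd (m' : T2 -> T1) (D' : {set T2}) (c : chain F T1) t :
  {in D' &, injective m'} ->
  (forall s, c s != 0 -> s \subset m' @: D') ->
  bd (push m' D' c) t = push m' D' (bd c) t.
Proof.
move=> minj csupp; rewrite /push.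
case: (boolP (t \subset D')) => tD; last first.
  rewrite /bd; case: ifP => // _; apply: big1 => v _.
  rewrite ifF ?mulr0 //; apply/negbTE; apply: contra tD => H.
  exact: fintype.subset_trans (subsetU1 v t) H.
rewrite /bd; case: ifP => [/eqP t0|t0].
  by rewrite t0 imset0 eqxx mulr0.
rewrite ifF; last first.
  have [u ut] : exists u, u \in t by apply/set0Pn; rewrite t0.
  by apply/negbTE/set0Pn; exists (m' u); apply: imset_f.
have tinj : {in t &, injective m'}.
  by move=> u w ut wt; apply: minj; apply: (fintype.subsetP tD).
rewrite (bigID (fun w => w \in m' @: D')) /= [X in _ = _ * (_ + X)]big1; last first.
  move=> w /andP[_ wD]; rewrite (_ : c _ = 0) ?mulr0 //; apply/eqP.
  apply: contraNT wD => /csupp /fintype.subsetP; apply; exact: setU11.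
rewrite [_ + 0]addr0.
rewrite (eq_bigl (fun w => w \in m' @: (D' :\: t))); last first.
  move=> w; rewrite inE; apply/andP/imsetP.
    case=> wt /imsetP[v vD wv]; exists v => //; rewrite inE vD andbT.
    by apply: contra wt => vt; rewrite wv; apply: imset_f.
  case=> v; rewrite inE => /andP[vt vD] ->; split; last exact: imset_f.
  apply/imsetP => -[u ut] /minj; rewrite vD => /(_ isT (fintype.subsetP tD u ut)) vu.
  by move: vt; rewrite vu ut.
rewrite big_imset /=; last first.
  by move=> u w; rewrite !inE => /andP[_ uD] /andP[_ wD]; apply: minj.
rewrite (bigID (fun v => v \in D')) /= [X in _ + X = _]big1; last first.
  move=> v /andP[_ vD]; rewrite ifF ?mulr0 //; apply/negbTE.
  by apply: contra vD => /fintype.subsetP; apply; exact: setU11.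
rewrite [_ + 0]addr0 (eq_bigl (fun v => v \in D' :\: t)); last first.
  by move=> v; rewrite !inE andbC.
rewrite mulr_sumr; apply: eq_bigr => v; rewrite inE => /andP[vt vD].
rewrite ifT; last by rewrite finset.subUset finset.sub1set vD tD.
rewrite imsetU1 !sgn_self (epsU1 _ vt) !sgnE big_imset //=.
suff E : \prod_(u in t) sg F (ltr u v) *
   \prod_(u in t) (sg F (ltr u v && ltr (m' v) (m' u)) * sg F (ltr v u && ltr (m' u) (m' v)))
   = \prod_(u in t) sg F (ltr (m' u) (m' v)).
  by rewrite -E; ring.
rewrite -big_split /=; apply: eq_bigr => u ut.
have uv : u != v by apply: contraNneq vt => <-.
have muv : m' u != m' v.
  by apply: contra uv => /eqP /minj; rewrite (fintype.subsetP tD u ut) vD => /(_ isT isT) ->.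
rewrite (ltrN (u:=v)) 1?eq_sym // (ltrN (u:=m' v)) 1?eq_sym //.
exact: sign_case.
Qed.

End Push.

Section PushInv.
Variable F : fieldType.
Variables T1 T2 : finType.

Lemma push_inv (m : T1 -> T2) (m' : T2 -> T1) (D : {set T1}) (D' : {set T2})
    (c : chain F T1) s :
  (forall u, u \in D -> m u \in D' /\ m' (m u) = u) ->
  (forall s, c s != 0 -> s \subset D) ->
  push m D (push m' D' c) s = c s.
Proof.
move=> mD csupp; rewrite /push.
case: (boolP (s \subset D)) => sD; last first.
  by apply/esym/eqP; apply: contraNT sD => /csupp.
have minj : {in s &, injective m}.
  move=> u w us ws muw.
  by rewrite -(mD u (fintype.subsetP sD u us)).2 muw (mD w (fintype.subsetP sD w ws)).2.
rewrite ifT; last first.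
  by apply/fintype.subsetP => _ /imsetP[u us ->]; exact: (mD u (fintype.subsetP sD u us)).1.
have -> : m' @: (m @: s) = s.
  rewrite -imset_comp; apply/setP => u; apply/imsetP/idP.
    by case=> w ws ->; rewrite /= (mD w (fintype.subsetP sD w ws)).2.
  by move=> us; exists u => //=; rewrite (mD u (fintype.subsetP sD u us)).2.
rewrite mulrA; suff -> : eps F m s * eps F m' (m @: s) = 1 by rewrite mul1r.
rewrite /eps big_imset //=.
under [X in _ * X]eq_bigr => u us do rewrite big_imset //=.
under [X in _ * X]eq_bigr => u us do under eq_bigr => w ws do
  rewrite (mD u (fintype.subsetP sD u us)).2 (mD w (fintype.subsetP sD w ws)).2.
rewrite [X in X * _]exchange_big /= -big_split /=.
apply: big1 => u _; rewrite -big_split /=; apply: big1 => w _.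
by rewrite andbC sgK.
Qed.

End PushInv.

Section Retract.
Variable F : fieldType.
Variable T : finType.
Variable r : T -> T.

Fixpoint Rl (l : seq T) (c : chain F T) : chain F T :=
  if l is b :: l' then rho b (r b) (Rl l' c) else c.

Lemma RlZD l a (u v : chain F T) :
  Rl l (fun s => a * u s + v s) = (fun s => a * Rl l u s + Rl l v s).
Proof.
elim: l => [//|b l IH] /=; rewrite IH; apply: funext => t; exact: rhoZD.
Qed.

Lemma Rl0 l : Rl l (fun _ => 0) = (fun _ => 0).
Proof.
have := RlZD l (-1) (fun _ => 0) (fun _ => 0).
rewrite (_ : (fun _ : {set T} => -1 * 0 + 0) = (fun _ => 0 : F)); last first.
  by apply: funext => s; rewrite mulr0 addr0.
move=> ->; apply: funext => s; rewrite mulN1r addNr //.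
Qed.

Lemma Rl_bd l c : Rl l (bd c) = bd (Rl l c).
Proof.
elim: l => [//|b l IH] /=; rewrite IH; apply: funext => t; exact: rho_bd.
Qed.

Lemma Rl_id (l : seq T) (c : chain F T) : (forall b, b \in l -> b != r b) ->
  (forall (s : {set T}) b, b \in l -> b \in s -> c s = 0) -> Rl l c = c.
Proof.
elim: l => [//|b l IH] Hne Hc /=.
rewrite IH; last by move=> s b' b'l; apply: Hc; rewrite inE b'l orbT.
  by apply: funext => t; apply: (rho_id (Hne b (mem_head _ _))) => s; apply: Hc (mem_head _ _).
by move=> b' b'l; apply: Hne; rewrite inE b'l orbT.
Qed.

Lemma rho_supp (b : T) (c : chain F T) t : b != r b -> rho b (r b) c t != 0 ->
  b \notin t /\ (c t != 0 \/ (r b \in t /\ c ((b |: t) :\ r b) != 0)).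
Proof.
move=> br H; have bt : b \notin t by apply: contra H => bt; rewrite (rho_x br c bt).
split => //.
have [//|n1] := pselect (c t != 0 \/ (r b \in t /\ c ((b |: t) :\ r b) != 0)).
exfalso; move/negP: H; apply; apply/eqP; apply: rho_nx => //.
  by case: (eqVneq (c t) 0) => // h; exfalso; apply: n1; left.
move=> rbt; case: (eqVneq (c ((b |: t) :\ r b)) 0) => // h.
by exfalso; apply: n1; right.
Qed.

Lemma card_swap (b x0 : T) (t : {set T}) : b \notin t -> x0 \in t ->
  #|(b |: t) :\ x0| = #|t|.
Proof.
move=> bt x0t.
have x0in : x0 \in b |: t by rewrite !inE x0t orbT.
have := cardsD1 x0 (b |: t); rewrite x0in cardsU1 bt /= add1n => -[].
by move=> ->.
Qed.

Lemma Rl_chain (P : {set T} -> Prop) (k : nat) (l : seq T) (c : chain F T) :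
  (forall b, b \in l -> b != r b) -> (forall b, b \in l -> r b \notin l) ->
  (forall b (t : {set T}), b \in l -> b \notin t -> r b \in t -> P ((b |: t) :\ r b) -> P t) ->
  is_chain P k c ->
  is_chain P k (Rl l c) /\ (forall t, Rl l c t != 0 -> forall b, b \in l -> b \notin t).
Proof.
elim: l => [|b l IH] Hne Hr HP Hc /=.
  by split => // t _ b; rewrite in_nil.
have Hne' : forall b', b' \in l -> b' != r b' by move=> b' b'l; apply: Hne; rewrite inE b'l orbT.
have Hr' : forall b', b' \in l -> r b' \notin l.
  move=> b' b'l; have := Hr b'; rewrite inE b'l orbT => /(_ isT).
  by rewrite inE negb_or => /andP[].
have HP' : forall b' (t : {set T}), b' \in l -> b' \notin t -> r b' \in t -> P ((b' |: t) :\ r b') -> P t.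
  by move=> b' t b'l; apply: HP; rewrite inE b'l orbT.
have [IHc IHa] := IH Hne' Hr' HP' Hc.
have bl : b \in b :: l := mem_head _ _.
have rbl : r b \notin l by have := Hr b bl; rewrite inE negb_or => /andP[].
split.
  move=> t /(rho_supp (Hne b bl)) [bt [/IHc //|[rbt /IHc [Ps cs]]]].
  split; first exact: HP bl bt rbt Ps.
  by rewrite -cs card_swap.
move=> t /(rho_supp (Hne b bl)) [bt H] b'; rewrite inE => /orP[/eqP -> //|b'l].
case: H => [/IHa/(_ b' b'l) //|[rbt /IHa /(_ b' b'l) H]].
apply: contra H => b't; rewrite !inE b't orbT andbT.
by apply: contraNneq rbl => <-.
Qed.

Lemma hmove_chain (P Q : {set T} -> Prop) (k : nat) (b : T) (c : chain F T) :
  b != r b -> (forall s, P s -> b \in s -> Q (r b |: s)) ->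
  is_chain P k c -> is_chain Q k.+1 (hmove b (r b) c).
Proof.
move=> br HQ Hc u /hmove_neq0 [bu rbu /Hc [Ps cs]].
have bs : b \in u :\ r b by rewrite !inE bu andbT.
split; first by have := HQ _ Ps bs; rewrite finset.setD1K.
by have := cardsD1 (r b) u; rewrite rbu cs add1n.
Qed.

Lemma bnd_add (K : {set T} -> Prop) k (u v : chain F T) :
  is_boundary K k u -> is_boundary K k v -> is_boundary K k (fun s => u s + v s).
Proof.
move=> [bu [Hbu Eu]] [bv [Hbv Ev]]; exists (fun s => bu s + bv s); split.
  move=> s H; case: (eqVneq (bu s) 0) => [E|/Hbu //].
  by apply: Hbv; move: H; rewrite E add0r.
by move=> s; rewrite bdD Eu Ev.
Qed.

Lemma Rl_hom (P Q : {set T} -> Prop) (k : nat) (l : seq T) (c : chain F T) :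
  (forall b, b \in l -> b != r b) -> (forall b, b \in l -> r b \notin l) ->
  (forall b (t : {set T}), b \in l -> b \notin t -> r b \in t -> P ((b |: t) :\ r b) -> P t) ->
  (forall b (s : {set T}), b \in l -> P s -> b \in s -> Q (r b |: s)) ->
  is_chain P k c -> (forall s, bd c s = 0) ->
  is_boundary Q k (fun s => Rl l c s - c s).
Proof.
elim: l => [|b l IH] Hne Hr HP HQ Hc Hz /=.
  exists (fun _ => 0); split; first by move=> s; rewrite eqxx.
  move=> s; rewrite subrr; symmetry; exact: bd0.
have bl : b \in b :: l := mem_head _ _.
have Hne' : forall b', b' \in l -> b' != r b' by move=> b' b'l; apply: Hne; rewrite inE b'l orbT.
have Hr' : forall b', b' \in l -> r b' \notin l.
  move=> b' b'l; have := Hr b'; rewrite inE b'l orbT => /(_ isT).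
  by rewrite inE negb_or => /andP[].
have HP' : forall b' (t : {set T}), b' \in l -> b' \notin t -> r b' \in t -> P ((b' |: t) :\ r b') -> P t.
  by move=> b' t b'l; apply: HP; rewrite inE b'l orbT.
have HQ' : forall b' (s : {set T}), b' \in l -> P s -> b' \in s -> Q (r b' |: s).
  by move=> b' s b'l; apply: HQ; rewrite inE b'l orbT.
have IHb := IH Hne' Hr' HP' HQ' Hc Hz.
have [Hc' _] := Rl_chain Hne' Hr' HP' Hc.
have cyc : forall s, bd (Rl l c) s = 0.
  move=> s; rewrite -Rl_bd (_ : bd c = fun _ => 0) ?Rl0 //; exact: funext.
have -> : (fun s => rho b (r b) (Rl l c) s - c s) =
    (fun s => (rho b (r b) (Rl l c) s - Rl l c s) + (Rl l c s - c s)).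
  by apply: funext => s; rewrite addrA subrK.
apply: bnd_add => //.
exists (hmove b (r b) (Rl l c)); split.
  by apply: (hmove_chain (Hne b bl)) Hc' => s; apply: HQ.
by move=> s; apply: rho_cycle.
Qed.

End Retract.


Section Metric.
Variable R : realType.
Variable X : finType.
Variable d : R -> X -> X -> R.
Hypothesis d0 : forall t x y, 0 <= d t x y.

Lemma di_lbound a b x y : has_lbound [set d t x y | t in [set t : R | a <= t <= b]].
Proof. by exists 0 => _ [t _ <-]. Qed.

Lemma di_le a b t x y : a <= t <= b -> dist_int d a b x y <= d t x y.
Proof.
move=> tab; rewrite /dist_int; apply: (ge_inf (di_lbound a b x y)).
by exists t.
Qed.

Lemma di_approx a b x y eta : a <= b -> 0 < eta ->
  exists2 t, a <= t <= b & d t x y < dist_int d a b x y + eta.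
Proof.
move=> ab eta0; have [|_ [t tab <-] H] := inf_adherent eta0 (E := [set d t x y | t in [set t : R | a <= t <= b]]).
  split; last exact: di_lbound.
  by exists (d a x y); exists a => //; apply/andP; split; [exact: lexx | exact: ab].
by exists t.
Qed.

Lemma di_ge0 a b x y : a <= b -> 0 <= dist_int d a b x y.
Proof.
move=> ab; rewrite /dist_int; apply: lb_le_inf.
  by exists (d a x y); exists a => //; apply/andP; split; [exact: lexx | exact: ab].
by move=> _ [t _ <-].
Qed.

Lemma di_mono a b a' b' x y : a' <= a -> a <= b -> b <= b' ->
  dist_int d a' b' x y <= dist_int d a b x y.
Proof.
move=> a'a ab bb'; apply/ler_addgt0Pr => eta eta0.
have [t /andP[hat tb] H] := di_approx x y ab eta0.
apply: le_trans (ltW H); apply: di_le.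
by rewrite (le_trans a'a hat) (le_trans tb bb').
Qed.

Lemma di_self a b x : a <= b -> (forall t, d t x x = 0) -> dist_int d a b x x = 0.
Proof.
move=> ab dxx; apply/eqP; rewrite eq_le di_ge0 // andbT.
by rewrite -(dxx a); apply: di_le; apply/andP; split; [exact: lexx | exact: ab].
Qed.

End Metric.

Lemma transfer (R : realType) (A B : finType) (Z : Type) (dA : R -> A -> A -> R)
  (dB : R -> B -> B -> R) (pA : Z -> A) (pB : Z -> B) (e : R) a b z z' :
  (forall t x y, 0 <= dA t x y) -> (forall t x y, 0 <= dB t x y) -> 0 < e ->
  (forall t z z', vee dB t e (pB z) (pB z') <= dA t (pA z) (pA z') + 2 * e) ->
  a <= b ->
  dist_int dB (a - e) (b + e) (pB z) (pB z') <= dist_int dA a b (pA z) (pA z') + 2 * e.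
Proof.
move=> hA hB e0 H ab; apply/ler_addgt0Pr => eta eta0.
have eta2 : 0 < eta / 2 by rewrite divr_gt0.
have [t /andP[hat tb] Ht] := di_approx hA (pA z) (pA z') ab eta2.
have tee : t - e <= t + e by lra.
have [t' /andP[t1 t2] Ht'] := di_approx hB (pB z) (pB z') tee eta2.
have Hv := H t z z'.
have : dist_int dB (a - e) (b + e) (pB z) (pB z') <= dB t' (pB z) (pB z').
  by apply: (di_le hB); apply/andP; split; lra.
rewrite /vee -/(dist_int dB (t - e) (t + e) (pB z) (pB z')) in Hv.
lra.
Qed.


Section Glue.
Variable F : fieldType.
Variable T : finType.

Lemma homologous_eq (K : {set T} -> Prop) k (u v : chain F T) :
  (forall s, u s = v s) -> homologous K k u v.
Proof.
move=> uv; exists (fun _ => 0); split; first by move=> s; rewrite eqxx.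
by move=> s; rewrite uv subrr; symmetry; exact: bd0.
Qed.

Lemma pushZD (T2 : finType) (m' : T2 -> T) (D' : {set T2}) a (u v : chain F T) :
  push m' D' (fun s => a * u s + v s) = (fun t => a * push m' D' u t + push m' D' v t).
Proof. by apply: funext => t; rewrite /push; case: ifP => _; ring. Qed.

Lemma push0 (T2 : finType) (m' : T2 -> T) (D' : {set T2}) t :
  push m' D' (fun _ => (0 : F)) t = 0.
Proof. by rewrite /push; case: ifP => _; rewrite ?mulr0. Qed.

Lemma push_neq0 (T2 : finType) (m' : T2 -> T) (D' : {set T2}) (c : chain F T) t :
  push m' D' c t != 0 -> t \subset D' /\ c (m' @: t) != 0.
Proof.
rewrite /push; case: ifP => [tD H|_]; last by rewrite eqxx.
by split => //; apply: contra H => /eqP ->; rewrite mulr0.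
Qed.

End Glue.

Lemma rips_sub (R : realType) (X : finType) (d : R -> X -> X -> R) S a b dl
  (s t : {set X}) : rips d S a b dl s -> t != finset.set0 -> t \subset s ->
  rips d S a b dl t.
Proof.
move=> [s0 sS sd] t0 ts; split => //; first exact: fintype.subset_trans ts sS.
by move=> x y xt yt; apply: sd; apply: (fintype.subsetP ts).
Qed.

Lemma zero_interleaved (R : realType) (F : fieldType) (T1 T2 : finType)
  (K1 : filt R T1) (K2 : filt R T2) k e :
  (forall a b dl s, ~ K1 a b dl s) -> (forall a b dl s, ~ K2 a b dl s) ->
  interleaved F K1 K2 k e.
Proof.
move=> n1 n2.
have z1 : forall a b dl k' (z : chain F T1), is_chain (K1 a b dl) k' z -> forall s, z s = 0.
  by move=> a b dl k' z zc s; apply/eqP; apply: contrapT => /negP /zc [/n1].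
have z2 : forall a b dl k' (z : chain F T2), is_chain (K2 a b dl) k' z -> forall s, z s = 0.
  by move=> a b dl k' z zc s; apply/eqP; apply: contrapT => /negP /zc [/n2].
exists (fun _ _ _ _ _ => 0), (fun _ _ _ _ _ => 0); split.
- move=> a b dl _ _; split.
  + by move=> ? ? ?; apply: funext => s; rewrite mulr0 addr0.
  + by move=> z _; split; [move=> s; rewrite eqxx | move=> s; exact: bd0].
  + move=> z _; exists (fun _ => 0); split; [by move=> s; rewrite eqxx | move=> s; symmetry; exact: bd0].
  + by move=> *; apply: homologous_eq.
- move=> a b dl _ _; split.
  + by move=> ? ? ?; apply: funext => s; rewrite mulr0 addr0.
  + by move=> z _; split; [move=> s; rewrite eqxx | move=> s; exact: bd0].
  + move=> z _; exists (fun _ => 0); split; [by move=> s; rewrite eqxx | move=> s; symmetry; exact: bd0].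
  + by move=> *; apply: homologous_eq.
- move=> a b dl _ _ z [zc _]; apply: homologous_eq => s; by rewrite (z1 _ _ _ _ _ zc).
- move=> a b dl _ _ z [zc _]; apply: homologous_eq => s; by rewrite (z2 _ _ _ _ _ zc).
Qed.

Lemma interleaved_sym (R : realType) (F : fieldType) (T1 T2 : finType)
  (K1 : filt R T1) (K2 : filt R T2) k e :
  interleaved F K1 K2 k e -> interleaved F K2 K1 k e.
Proof. by move=> [f [g [hf hg H1 H2]]]; exists g, f; split. Qed.

Section Core.
Variables (R : realType) (F : fieldType) (X Y : finType) (Z : Type).
Variables (dX : R -> X -> X -> R) (dY : R -> Y -> Y -> R) (pX : Z -> X) (pY : Z -> Y).
Variable e : R.
Hypotheses (hX0 : forall t x y, 0 <= dX t x y) (hXd : forall t x, dX t x x = 0).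
Hypotheses (hY0 : forall t x y, 0 <= dY t x y) (hYd : forall t x, dY t x x = 0).
Hypothesis e0 : 0 < e.
Hypothesis HXY : forall t z z', vee dY t e (pY z) (pY z') <= dX t (pX z) (pX z') + 2 * e.
Hypothesis HYX : forall t z z', vee dX t e (pX z) (pX z') <= dY t (pY z) (pY z') + 2 * e.
Variable zx : X -> Z.
Hypothesis hzx : forall x, pX (zx x) = x.
Variable S : {set X}.
Variable x0 : X.
Hypothesis x0S : x0 \in S.

Definition phi x := pY (zx x).
Definition S' := phi @: S.
Definition psi y := odflt x0 [pick x in S | phi x == y].
Definition A := psi @: S'.
Definition r x := psi (phi x).
Definition l := enum (S :\: A).

Lemma psiP y : y \in S' -> psi y \in S /\ phi (psi y) = y.
Proof.
move=> /imsetP[x xS ->]; rewrite /psi; case: pickP => [x' /andP[x'S /eqP <-] //|/(_ x)].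
by rewrite xS eqxx.
Qed.

Lemma AS : A \subset S.
Proof. by apply/fintype.subsetP => _ /imsetP[y yS ->]; exact: (psiP yS).1. Qed.

Lemma rA a : a \in A -> r a = a /\ phi a \in S'.
Proof.
move=> /imsetP[y yS ->]; have [_ py] := psiP yS.
by rewrite /r py.
Qed.

Lemma rS x : x \in S -> r x \in A /\ phi (r x) = phi x.
Proof.
move=> xS; have pxS : phi x \in S' by apply: imset_f.
by split; [apply: imset_f | exact: (psiP pxS).2].
Qed.

Lemma lP b : b \in l -> b \in S /\ b \notin A.
Proof. by rewrite /l mem_enum !inE => /andP[-> ->]. Qed.

Lemma l_ne b : b \in l -> b != r b.
Proof.
move=> /lP [bS bA]; apply: contraNneq bA => ->; exact: (rS bS).1.
Qed.

Lemma l_r b : b \in l -> r b \notin l.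
Proof.
move=> /lP [bS _]; apply/negP => /lP [_]; by rewrite (rS bS).1.
Qed.

Lemma psi_inj : {in S' &, injective psi}.
Proof.
by move=> y y' yS y'S E; rewrite -(psiP yS).2 -(psiP y'S).2 E.
Qed.

Lemma phi_inj : {in A &, injective phi}.
Proof.
by move=> u u' uA u'A E; rewrite -(rA uA).1 -(rA u'A).1 /r E.
Qed.

Lemma dXY a b x x' : a <= b ->
  dist_int dY (a - e) (b + e) (phi x) (phi x') <= dist_int dX a b x x' + 2 * e.
Proof.
move=> ab; have := transfer (zx x) (zx x') hX0 hY0 e0 HXY ab.
by rewrite !hzx.
Qed.

Lemma dYX a b u u' : a <= b ->
  dist_int dX (a - e) (b + e) u u' <= dist_int dY a b (phi u) (phi u') + 2 * e.
Proof.
move=> ab; have := transfer (zx u) (zx u') hY0 hX0 e0 HYX ab.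
by rewrite !hzx.
Qed.

Lemma M1 a b dl x x' u u' : a <= b ->
  dist_int dX a b x x' <= dl -> phi u = phi x -> phi u' = phi x' ->
  dist_int dX (a - 2 * (2 * e)) (b + 2 * (2 * e)) u u' <= dl + 2 * (2 * e).
Proof.
move=> ab H pu pu'.
have h1 := dXY x x' ab.
have he := e0.
have ab' : a - e <= b + e by lra.
have h2 := dYX u u' ab'; rewrite pu pu' in h2.
have h3 : dist_int dX (a - 2 * (2 * e)) (b + 2 * (2 * e)) u u' <=
          dist_int dX (a - e - e) (b + e + e) u u'.
  by apply: (di_mono hX0); lra.
lra.
Qed.

Lemma M2 a b dl x x' : a <= b -> dist_int dX a b x x' <= dl ->
  dist_int dY (a - 2 * e) (b + 2 * e) (phi x) (phi x') <= dl + 2 * e.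
Proof.
move=> ab H; have he := e0; have h1 := dXY x x' ab.
have h3 : dist_int dY (a - 2 * e) (b + 2 * e) (phi x) (phi x') <=
          dist_int dY (a - e) (b + e) (phi x) (phi x').
  by apply: (di_mono hY0); lra.
lra.
Qed.

Lemma M3 a b dl u u' : a <= b -> dist_int dY a b (phi u) (phi u') <= dl ->
  dist_int dX (a - 2 * e) (b + 2 * e) u u' <= dl + 2 * e.
Proof.
move=> ab H; have he := e0; have h1 := dYX u u' ab.
have h3 : dist_int dX (a - 2 * e) (b + 2 * e) u u' <= dist_int dX (a - e) (b + e) u u'.
  by apply: (di_mono hX0); lra.
lra.
Qed.

Definition Good a b dl (s : {set X}) :=
  rips dX S (a - 2 * (2 * e)) (b + 2 * (2 * e)) (dl + 2 * (2 * e)) (s :|: r @: s) /\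
  rips dY S' (a - 2 * e) (b + 2 * e) (dl + 2 * e) (phi @: s).

Lemma Good_init a b dl s : a <= b -> 0 <= dl -> rips dX S a b dl s -> Good a b dl s.
Proof.
move=> ab dl0 [s0 sS sd].
have [x1 x1s] : exists x, x \in s by apply/set0Pn.
have src : forall u, u \in s :|: r @: s -> exists2 x, x \in s & phi u = phi x.
  move=> u; rewrite finset.in_setU => /orP[us|/imsetP[x xs ->]]; first by exists u.
  by exists x => //; exact: (rS (fintype.subsetP sS x xs)).2.
split; split.
- by apply/set0Pn; exists x1; rewrite finset.in_setU x1s.
- rewrite finset.subUset sS /=; apply/fintype.subsetP => _ /imsetP[x xs ->].
  exact: (fintype.subsetP AS) (rS (fintype.subsetP sS x xs)).1.
- move=> u u' /src[x xs pu] /src[x' x's pu'].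
  by apply: M1 pu pu' => //; apply: sd.
- by apply/set0Pn; exists (phi x1); apply: imset_f.
- exact: imsetS.
- move=> _ _ /imsetP[x xs ->] /imsetP[x' x's ->].
  by apply: M2 => //; apply: sd.
Qed.

Lemma Good_S a b dl s : Good a b dl s -> s \subset S.
Proof.
move=> [[_ H _] _]; apply: fintype.subset_trans H; exact: finset.subsetUl.
Qed.

Lemma Good_move a b dl b0 (t : {set X}) : b0 \in l -> b0 \notin t -> r b0 \in t ->
  Good a b dl ((b0 |: t) :\ r b0) -> Good a b dl t.
Proof.
move=> b0l b0t rbt [G1 G2].
have [b0S b0A] := lP b0l.
have ne := l_ne b0l.
have b0in : b0 \in (b0 |: t) :\ r b0 by rewrite !inE eqxx andbT; exact: ne.
have rrb : r (r b0) = r b0 by exact: (rA (rS b0S).1).1.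
split.
- apply: (rips_sub (t := t :|: r @: t) G1).
    by apply/set0Pn; exists (r b0); rewrite finset.in_setU rbt.
  apply/fintype.subsetP => u; rewrite finset.in_setU => /orP[ut|/imsetP[w wt ->]].
    case: (eqVneq u (r b0)) => [->|urb].
      by rewrite finset.in_setU; apply/orP; right; apply: imset_f.
    by rewrite finset.in_setU !inE urb ut orbT.
  case: (eqVneq w (r b0)) => [->|wrb].
    by rewrite rrb finset.in_setU; apply/orP; right; apply: imset_f.
  by rewrite finset.in_setU; apply/orP; right; apply: imset_f; rewrite !inE wrb wt orbT.
- apply: (rips_sub (t := phi @: t) G2); first by apply/set0Pn; exists (phi (r b0)); apply: imset_f.
  apply/fintype.subsetP => _ /imsetP[w wt ->].
  case: (eqVneq w (r b0)) => [->|wrb].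
    by rewrite (rS b0S).2; apply: imset_f.
  by apply: imset_f; rewrite !inE wrb wt orbT.
Qed.

Lemma Good_Q a b dl b0 (s : {set X}) : Good a b dl s -> b0 \in s ->
  rips dX S (a - 2 * (2 * e)) (b + 2 * (2 * e)) (dl + 2 * (2 * e)) (r b0 |: s).
Proof.
move=> [G1 _] b0s; apply: (rips_sub (t := r b0 |: s) G1); first by apply/set0Pn; exists (r b0); exact: setU11.
rewrite finset.subUset finset.subsetUl andbT finset.sub1set finset.in_setU; apply/orP; right.
exact: imset_f.
Qed.

Definition fmap (c : chain F X) : chain F Y := push psi S' (Rl r l c).
Definition gmap (w : chain F Y) : chain F X := push phi A w.

Lemma Rl_supp a b dl k (c : chain F X) : a <= b -> 0 <= dl ->
  is_chain (rips dX S a b dl) k c ->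
  is_chain (Good a b dl) k (Rl r l c) /\ (forall t, Rl r l c t != 0 -> t \subset A).
Proof.
move=> ab dl0 cc.
have cc' : is_chain (Good a b dl) k c.
  by move=> s /cc [Hs ->]; split => //; exact: Good_init.
have [H1 H2] := Rl_chain l_ne l_r (@Good_move a b dl) cc'.
split => // t tn0; apply/fintype.subsetP => u ut.
have uS : u \in S by have [/Good_S /fintype.subsetP GS _] := H1 t tn0; exact: GS.
apply: contraT => uA.
have ul : u \in l by rewrite /l mem_enum !inE uA uS.
by move: (H2 t tn0 u ul); rewrite ut.
Qed.

Lemma f_chain a b dl k (c : chain F X) : a <= b -> 0 <= dl ->
  is_chain (rips dX S a b dl) k c ->
  is_chain (rips dY S' (a - 2 * e) (b + 2 * e) (dl + 2 * e)) k (fmap c).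
Proof.
move=> ab dl0 cc t /push_neq0 [tS /(Rl_supp ab dl0 cc).1 [[_ G2] sz]].
have tinj : {in t &, injective psi}.
  by move=> u w ut wt; apply: psi_inj; apply: (fintype.subsetP tS).
have E : phi @: (psi @: t) = t.
  rewrite -imset_comp; apply/setP => y; apply/imsetP/idP.
    by case=> u ut ->; rewrite /= (psiP (fintype.subsetP tS u ut)).2.
  by move=> yt; exists y => //=; rewrite (psiP (fintype.subsetP tS y yt)).2.
by rewrite E in G2; split => //; rewrite -sz card_in_imset.
Qed.

Lemma g_chain a b dl k (w : chain F Y) : a <= b -> 0 <= dl ->
  is_chain (rips dY S' a b dl) k w ->
  is_chain (rips dX S (a - 2 * e) (b + 2 * e) (dl + 2 * e)) k (gmap w).
Proof.
move=> ab dl0 wc s /push_neq0 [sA /wc [[s0 sS sd] sz]].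
have sinj : {in s &, injective phi}.
  by move=> u v us vs; apply: phi_inj; apply: (fintype.subsetP sA).
split; last by rewrite -sz card_in_imset.
split.
- apply: contraNneq s0 => ->; by rewrite imset0.
- exact: fintype.subset_trans sA AS.
- move=> u u' us u's; apply: M3 => //; apply: sd; exact: imset_f.
Qed.

Lemma f_bd a b dl k (c : chain F X) t : a <= b -> 0 <= dl ->
  is_chain (rips dX S a b dl) k c -> bd (fmap c) t = fmap (bd c) t.
Proof.
move=> ab dl0 cc; rewrite /fmap Rl_bd push_bd //; first exact: psi_inj.
by move=> s /(Rl_supp ab dl0 cc).2.
Qed.

Lemma S'_sub : S' \subset phi @: A.
Proof.
apply/fintype.subsetP => y yS; apply/imsetP; exists (psi y); first exact: imset_f.
by rewrite (psiP yS).2.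
Qed.

Lemma g_bd a b dl k (w : chain F Y) t :
  is_chain (rips dY S' a b dl) k w -> bd (gmap w) t = gmap (bd w) t.
Proof.
move=> wc; rewrite /gmap push_bd //; first exact: phi_inj.
move=> s /wc [[_ sS _] _]; exact: fintype.subset_trans sS S'_sub.
Qed.

Lemma fg (w : chain F Y) s : (forall s, w s != 0 -> s \subset S') -> fmap (gmap w) s = w s.
Proof.
move=> wsupp; rewrite /fmap Rl_id; first last.
- move=> s' b0 b0l b0s; rewrite /gmap /push ifF //; apply/negbTE.
  apply: contra (lP b0l).2 => /fintype.subsetP; apply; exact: b0s.
- exact: l_ne.
rewrite /gmap push_inv //.
move=> y yS; split; [exact: imset_f | exact: (psiP yS).2].
Qed.

Lemma gf a b dl k (c : chain F X) s : a <= b -> 0 <= dl ->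
  is_chain (rips dX S a b dl) k c -> gmap (fmap c) s = Rl r l c s.
Proof.
move=> ab dl0 cc; rewrite /gmap /fmap push_inv //.
  by move=> u uA; have [ru pu] := rA uA; split => //; exact: ru.
by move=> s' /(Rl_supp ab dl0 cc).2.
Qed.

Lemma core_interleaved k :
  interleaved F (rips dX S) (rips dY S') k (2 * e).
Proof.
exists (fun _ _ _ => fmap), (fun _ _ _ => gmap); split.
- move=> a b dl ab dl0; split.
  + by move=> al u v; rewrite /fmap RlZD pushZD.
  + move=> z [zc zb]; split; first exact: f_chain zc.
    move=> s; rewrite (f_bd _ ab dl0 zc) /fmap.
    by rewrite (_ : bd z = fun _ => 0) ?Rl0 ?push0 //; apply: funext.
  + move=> z [b' [b'c zb']]; exists (fmap b'); split; first exact: f_chain b'c.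
    move=> s; rewrite (f_bd _ ab dl0 b'c).
    by rewrite (_ : z = bd b') //; apply: funext.
  + by move=> *; apply: homologous_eq.
- move=> a b dl ab dl0; split.
  + by move=> al u v; rewrite /gmap pushZD.
  + move=> z [zc zb]; split; first exact: g_chain zc.
    move=> s; rewrite (g_bd _ zc) /gmap.
    by rewrite (_ : bd z = fun _ => 0) ?push0 //; apply: funext.
  + move=> z [b' [b'c zb']]; exists (gmap b'); split.
      have ab' : a <= b by [].
      exact: g_chain b'c.
    move=> s; rewrite (g_bd _ b'c).
    by rewrite (_ : z = bd b') //; apply: funext.
  + by move=> *; apply: homologous_eq.
- move=> a b dl ab dl0 z [zc zb].
  rewrite /homologous (_ : (fun s => gmap (fmap z) s - z s) = (fun s => Rl r l z s - z s)); last first.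
    by apply: funext => s; rewrite (gf _ ab dl0 zc).
  have cc' : is_chain (Good a b dl) k z.
    by move=> s /zc [Hs ->]; split => //; exact: Good_init.
  apply: (Rl_hom l_ne l_r (@Good_move a b dl)) => //.
  by move=> b0 s' _; exact: Good_Q.
- move=> a b dl ab dl0 w [wc wb]; apply: homologous_eq => s.
  by rewrite fg // => s' /wc [[_ ? _] _].
Qed.

End Core.


Lemma partner (R : realType) (F : fieldType) (X Y : finType) (Z : Type)
  (dX : R -> X -> X -> R) (dY : R -> Y -> Y -> R) (pX : Z -> X) (pY : Z -> Y)
  (e : R) (k n : nat) :
  (forall t x y, 0 <= dX t x y) -> (forall t x y, 0 <= dY t x y) -> 0 < e ->
  (forall x, exists z, pX z = x) ->
  (forall t z z', vee dY t e (pY z) (pY z') <= dX t (pX z) (pX z') + 2 * e) ->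
  (forall t z z', vee dX t e (pX z) (pX z') <= dY t (pY z) (pY z') + 2 * e) ->
  forall S : {set X}, (#|S| <= n)%N ->
  exists2 S' : {set Y}, (#|S'| <= n)%N & interleaved F (rips dX S) (rips dY S') k (2 * e).
Proof.
move=> hX0 hY0 e0 surj HXY HYX S Sn.
case: (set_0Vmem S) => [S0 | [x0 x0S]].
  exists finset.set0; first by rewrite cards0.
  rewrite S0; apply: zero_interleaved => a b dl s [s0 sS _].
    by move: s0; rewrite -finset.subset0 sS.
  by move: s0; rewrite -finset.subset0 sS.
have [zx hzx] := choice surj.
exists (S' pY zx S); first exact: leq_trans (leq_imset_card _ _) Sn.
exact: (core_interleaved F hX0 hY0 e0 HXY HYX hzx S x0 k).
Qed.

Lemma dI_le (R : realType) (F : fieldType) (T1 T2 : finType) (K1 : filt R T1) (K2 : filt R T2)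
  k (e : R) : 0 <= e -> interleaved F K1 K2 k e -> (dI F K1 K2 k <= e%:E)%E.
Proof. by move=> e0 H; apply: ge_ereal_inf; exists e%:E => //; exists e. Qed.

Lemma bound_e (R : realType) (F : fieldType) (X Y : finType) (Z : Type)
  (dX : R -> X -> X -> R) (dY : R -> Y -> Y -> R) (pX : Z -> X) (pY : Z -> Y)
  (e : R) (k n : nat) :
  (forall t x y, 0 <= dX t x y) -> (forall t x y, 0 <= dY t x y) -> 0 < e ->
  (forall x, exists z, pX z = x) -> (forall y, exists z, pY z = y) ->
  is_2_tripod dX dY pX pY e ->
  (dH_pers F dX dY k n <= (2 * e)%:E)%E.
Proof.
move=> hX0 hY0 e0 sX sY tri.
have HXY : forall t z z', vee dY t e (pY z) (pY z') <= dX t (pX z) (pX z') + 2 * e.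
  by move=> t z z'; case: (tri t z z').
have HYX : forall t z z', vee dX t e (pX z) (pX z') <= dY t (pY z) (pY z') + 2 * e.
  by move=> t z z'; case: (tri t z z').
have e20 : 0 <= 2 * e by rewrite mulr_ge0 // ltW.
rewrite /dH_pers ge_max; apply/andP; split.
- apply: ge_ereal_sup => _ [S /= Sn <-].
  have [S' S'n H] := partner F k hX0 hY0 e0 sX HXY HYX Sn.
  apply: ge_ereal_inf; exists (dI F (rips dX S) (rips dY S') k); first by exists S'.
  exact: dI_le.
- apply: ge_ereal_sup => _ [S' /= S'n <-].
  have [S Sn H] := partner F k hY0 hX0 e0 sY HYX HXY S'n.
  apply: ge_ereal_inf; exists (dI F (rips dX S) (rips dY S') k); first by exists S.
  by apply: dI_le => //; apply: interleaved_sym.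
Qed.

Theorem mainTheorem5 (R : realType) (F : fieldType) (X Y : finType)
    (dX : R -> X -> X -> R) (dY : R -> Y -> Y -> R) (k n : nat) :
  is_dms dX -> is_dms dY -> (0 < n)%N ->
  (dH_pers F dX dY k n <= 2%:E * d_dyn dX dY)%E.
Proof.
move=> [hX0 _ _ _ _] [hY0 _ _ _ _] _.
have key : forall r : R, (d_dyn dX dY < r%:E)%E -> (dH_pers F dX dY k n <= (2 * r)%:E)%E.
  move=> r /ereal_inf_lt [_ [Z [pX [pY [sX sY ->]]]]] /ereal_inf_lt [_ [e [e0 tri] <-]].
  rewrite lte_fin => er.
  apply: le_trans (bound_e F k n hX0 hY0 e0 sX sY tri) _.
  by rewrite lee_fin ler_pM2l // ltW.
set D := d_dyn dX dY in key *; set H := dH_pers F dX dY k n in key *.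
case: D key => [d| |] key.
- rewrite -EFinM; case: H key => [h| |] key.
  + rewrite lee_fin; apply/ler_addgt0Pr => eta eta0.
    have := key (d + eta / 2); rewrite lte_fin lee_fin => /(_ ltac:(lra)).
    lra.
  + have := key (d + 1) ltac:(rewrite lte_fin; lra); rewrite leye_eq => /eqP H; discriminate H.
  + exact: leNye.
- by rewrite gt0_muley ?leey // lte_fin.
- case: H key => [h| |] key.
  + exfalso; have := key (h / 2 - 1)%R (ltNyr (h / 2 - 1)%R); rewrite lee_fin; lra.
  + exfalso; have := key 0%R (ltNyr 0%R); rewrite leye_eq => /eqP H; discriminate H.
  + exact: leNye.
Qed.
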